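(* Let $a\in\mathbb{H}$ have norm one, $\psi$ a linear isometry of $\mathbb{H}$, and $\varphi=T_{a,\bar a}\circ\sigma_{\mathbb{H}}$. Consider the conditions (i) $\varphi(\varphi(x)x)=\varphi(x)x$ for all $x$, (ii) $\varphi(\bar x\psi(x))=\bar x\psi(x)$ for all $x$, (iii) $\psi(\psi(y)\bar x+y\varphi(x))=\psi(y)\bar x+y\varphi(x)$ for all $x,y$. Then: (1) $(\varphi,\psi)$ satisfies (i) if and only if $a^2=\pm1$. (2) Assume $a^2=-1$. (a) For norm-one $b,c\in\mathrm{Im}(\mathbb{H})$, the pair $(\varphi,T_{b,c})$ satisfies (ii) and (iii) if and only if $c=\pm a$. (b) For norm-one $b\in\mathbb{H}$, neither $(\varphi,T_{b,b}\circ\sigma_{\mathbb{H}})$ nor $(\varphi,T_{b,-b}\circ\sigma_{\mathbb{H}})$ satisfies (ii).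
   Context: $T_{a,b}(x)=axb$ and $\sigma_{\mathbb{H}}(x)=\bar x$ on the quaternions $\mathbb{H}$; $\mathrm{Im}(\mathbb{H})$ is the space of pure quaternions. *)

(* Defs.v *)
From HB Require Import structures.
From mathcomp Require Import all_boot all_order all_algebra.
From mathcomp Require Import reals.
Set Implicit Arguments. Unset Strict Implicit. Unset Printing Implicit Defensive.
Import Order.TTheory GRing.Theory Num.Theory.
Local Open Scope ring_scope.

(* x = q0 + q1 i + q2 j + q3 k *)
Record quat (R : realType) := Quat { q0 : R; q1 : R; q2 : R; q3 : R }.

Section Quat.
Variable R : realType.
Implicit Types x y : quat R.

Definition qadd x y := Quat (q0 x + q0 y) (q1 x + q1 y) (q2 x + q2 y) (q3 x + q3 y).
Definition qopp x := Quat (- q0 x) (- q1 x) (- q2 x) (- q3 x).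
Definition qscale (r : R) x := Quat (r * q0 x) (r * q1 x) (r * q2 x) (r * q3 x).
Definition qone : quat R := Quat 1 0 0 0.

(* Hamilton product: i^2 = j^2 = k^2 = ijk = -1 *)
Definition qmul x y :=
  Quat (q0 x * q0 y - q1 x * q1 y - q2 x * q2 y - q3 x * q3 y)
       (q0 x * q1 y + q1 x * q0 y + q2 x * q3 y - q3 x * q2 y)
       (q0 x * q2 y - q1 x * q3 y + q2 x * q0 y + q3 x * q1 y)
       (q0 x * q3 y + q1 x * q2 y - q2 x * q1 y + q3 x * q0 y).

Definition qconj x := Quat (q0 x) (- q1 x) (- q2 x) (- q3 x).

Definition qnorm x : R := Num.sqrt (q0 x ^+ 2 + q1 x ^+ 2 + q2 x ^+ 2 + q3 x ^+ 2).

Definition is_pure x : Prop := q0 x = 0.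

Definition T (a b : quat R) (x : quat R) : quat R := qmul (qmul a x) b.

Definition linear_isometry (f : quat R -> quat R) : Prop :=
  (forall x y, f (qadd x y) = qadd (f x) (f y)) /\
  (forall (r : R) x, f (qscale r x) = qscale r (f x)) /\
  (forall x, qnorm (f x) = qnorm x).

Definition cond_i (phi psi : quat R -> quat R) : Prop :=
  forall x, phi (qmul (phi x) x) = qmul (phi x) x.
Definition cond_ii (phi psi : quat R -> quat R) : Prop :=
  forall x, phi (qmul (qconj x) (psi x)) = qmul (qconj x) (psi x).
Definition cond_iii (phi psi : quat R -> quat R) : Prop :=
  forall x y, psi (qadd (qmul (psi y) (qconj x)) (qmul y (phi x)))
              = qadd (qmul (psi y) (qconj x)) (qmul y (phi x)).
End Quat.

(* Main.v *)
Require Import Defs.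
From mathcomp Require Import all_boot all_order all_algebra.
From mathcomp Require Import reals.
From mathcomp Require Import ring lra.
Import Order.TTheory GRing.Theory Num.Theory.
Local Open Scope ring_scope.
Set Implicit Arguments. Unset Strict Implicit.

Section Helpers.
Variable R : realType.
Implicit Types x y z a b c : quat R.

Lemma quatE x y : q0 x = q0 y -> q1 x = q1 y -> q2 x = q2 y -> q3 x = q3 y -> x = y.
Proof. by case: x; case: y => /= ? ? ? ? ? ? ? ? -> -> -> ->. Qed.

Definition N x := q0 x ^+ 2 + q1 x ^+ 2 + q2 x ^+ 2 + q3 x ^+ 2.

Lemma norm1 x : qnorm x = 1 -> N x = 1.
Proof.
rewrite /qnorm => h. have h0 : 0 <= N x by rewrite /N !addr_ge0 ?sqr_ge0.
by rewrite -(sqr_sqrtr h0) /N h expr1n.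
Qed.

Definition phi a z := T a (qconj a) (qconj z).
Definition dd a z := q1 a * q1 z + q2 a * q2 z + q3 a * q3 z.

Lemma phi_pure a z : q0 a = 0 -> phi a z =
  Quat (N a * q0 z) (N a * q1 z - 2 * dd a z * q1 a) (N a * q2 z - 2 * dd a z * q2 a)
       (N a * q3 z - 2 * dd a z * q3 a).
Proof.
case: a => a0 a1 a2 a3; case: z => z0 z1 z2 z3 /= ->.
by apply: quatE; rewrite /= /N /dd /=; ring.
Qed.

Lemma fixP a z : q0 a = 0 -> N a = 1 -> (phi a z = z <-> dd a z = 0).
Proof.
move=> a0 Na; rewrite phi_pure // Na !mul1r; split.
- move=> e; have /= e1 := f_equal (@q1 R) e; have /= e2 := f_equal (@q2 R) e;
  have /= e3 := f_equal (@q3 R) e.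
  have h1 : dd a z * q1 a = 0 by lra.
  have h2 : dd a z * q2 a = 0 by lra.
  have h3 : dd a z * q3 a = 0 by lra.
  have -> : dd a z = dd a z * N a by rewrite Na mulr1.
  have -> : dd a z * N a = q0 a * (dd a z * q0 a) + q1 a * (dd a z * q1 a) + q2 a * (dd a z * q2 a) + q3 a * (dd a z * q3 a) by rewrite /N; ring.
  by rewrite h1 h2 h3 a0 !mulr0 ?mul0r ?addr0.
- move=> ->; case: z => ????; by apply: quatE => /=; ring.
Qed.
Lemma sq_one a : N a = 1 -> qmul a a = qone R ->
  [/\ q1 a = 0, q2 a = 0, q3 a = 0 & q0 a ^+ 2 = 1].
Proof.
case: a => a0 a1 a2 a3; rewrite /N /= => hN e.
have /= e0 := f_equal (@q0 R) e.
have h1 : a1 = 0 by nra.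
have h2 : a2 = 0 by nra.
have h3 : a3 = 0 by nra.
split => //; nra.
Qed.

Lemma sq_mone a : N a = 1 -> qmul a a = qopp (qone R) -> q0 a = 0.
Proof.
case: a => a0 a1 a2 a3; rewrite /N /= => hN e.
have /= e0 := f_equal (@q0 R) e.
nra.
Qed.
Lemma Pform a x : phi a (qmul (phi a x) x) = qmul (qmul a (qconj x)) (qmul (qmul (qmul a x) (qconj a)) (qconj a)).
Proof. case: a => ????; case: x => ????. by apply: quatE; rewrite /=; ring. Qed.
Lemma Qform a x : qmul (phi a x) x = qmul (qmul a (qconj x)) (qmul (qconj a) x).
Proof. case: a => ????; case: x => ????. by apply: quatE; rewrite /=; ring. Qed.
Lemma Nmul x y : N (qmul x y) = N x * N y.
Proof. case: x => ????; case: y => ????. by rewrite /N /=; ring. Qed.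
Lemma Nconj x : N (qconj x) = N x.
Proof. case: x => ????. by rewrite /N /=; ring. Qed.
Lemma qcancel u p q : N u != 0 -> qmul u p = qmul u q -> p = q.
Proof.
move=> hu e; have e' := f_equal (qmul (qconj u)) e.
have key : forall r, qmul (qconj u) (qmul u r) = qscale (N u) r.
  by move=> r; case: u {hu e e'} => ????; case: r => ????; apply: quatE; rewrite /N /=; ring.
move: e'; rewrite !key; case: p {e} => ????; case: q => ???? [] e0 e1 e2 e3.
by rewrite (mulfI hu e0) (mulfI hu e1) (mulfI hu e2) (mulfI hu e3).
Qed.
Lemma L1 a x : qmul (qmul a (qmul (qmul (qmul a x) (qconj a)) (qconj a))) (qmul a a) = qscale (N a ^+ 2) (qmul (qmul a a) x).
Proof. case: a => ????; case: x => ????. by apply: quatE; rewrite /N /=; ring. Qed.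
Lemma L2 a x : qmul (qmul a (qmul (qconj a) x)) (qmul a a) = qscale (N a) (qmul x (qmul a a)).
Proof. case: a => ????; case: x => ????. by apply: quatE; rewrite /N /=; ring. Qed.
Lemma qscale1 x : qscale 1 x = x.
Proof. by case: x => ????; rewrite /qscale /= !mul1r. Qed.

Lemma comm a x : N a = 1 -> N x != 0 -> phi a (qmul (phi a x) x) = qmul (phi a x) x ->
  qmul (qmul a a) x = qmul x (qmul a a).
Proof.
move=> hNa hx; rewrite Pform Qform => /qcancel.
rewrite Nmul Nconj hNa mul1r => /(_ hx) e.
have := f_equal (fun z => qmul (qmul a z) (qmul a a)) e.
by rewrite /= L1 L2 hNa expr1n !qscale1.
Qed.

Lemma part1_fwd a : N a = 1 -> (forall x, phi a (qmul (phi a x) x) = qmul (phi a x) x) ->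
  qmul a a = qone R \/ qmul a a = qopp (qone R).
Proof.
move=> hNa H.
have ci := @comm a (Quat 0 1 0 0) hNa.
have cj := @comm a (Quat 0 0 1 0) hNa.
have n1 : N (Quat 0 1 0 0 : quat R) != 0 by rewrite /N /=; apply/eqP; nra.
have n2 : N (Quat 0 0 1 0 : quat R) != 0 by rewrite /N /=; apply/eqP; nra.
move: (H (Quat 0 1 0 0)) (H (Quat 0 0 1 0)) => Hi Hj.
move: (ci n1 Hi) (cj n2 Hj) hNa; case: a {H ci cj Hi Hj} => a0 a1 a2 a3 ei ej.
have /= i2 := f_equal (@q2 R) ei; have /= i3 := f_equal (@q3 R) ei.
have /= j1 := f_equal (@q1 R) ej; have /= j3 := f_equal (@q3 R) ej.
rewrite /N /= => hN.
have h3 : a0 * a3 = 0 by lra.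
have h2 : a0 * a2 = 0 by lra.
have h1 : a0 * a1 = 0 by lra.
have [a00|a0n] := eqVneq a0 0.
- subst a0; right; rewrite !expr2 in hN; apply: quatE => /=; lra.
- have z1 : a1 = 0 by move/eqP: h1; rewrite mulf_eq0 (negbTE a0n) /= => /eqP.
  have z2 : a2 = 0 by move/eqP: h2; rewrite mulf_eq0 (negbTE a0n) /= => /eqP.
  have z3 : a3 = 0 by move/eqP: h3; rewrite mulf_eq0 (negbTE a0n) /= => /eqP.
  subst; left; rewrite !expr2 in hN; apply: quatE => /=; lra.
Qed.

Lemma P_real a x : q1 a = 0 -> q2 a = 0 -> q3 a = 0 ->
  phi a (qmul (phi a x) x) = qscale (q0 a ^+ 2) (qmul (phi a x) x).
Proof. case: a => a0 a1 a2 a3 /= -> -> ->; case: x => ????. by apply: quatE; rewrite /=; ring. Qed.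
Lemma P_pure a x : q0 a = 0 ->
  phi a (qmul (phi a x) x) = qscale (N a) (qmul (phi a x) x).
Proof. case: a => a0 a1 a2 a3 /= ->; case: x => ????. by apply: quatE; rewrite /N /=; ring. Qed.

Lemma part1_bwd a : N a = 1 -> qmul a a = qone R \/ qmul a a = qopp (qone R) ->
  forall x, phi a (qmul (phi a x) x) = qmul (phi a x) x.
Proof.
move=> hN [h|h] x.
- have [h1 h2 h3 h0] := sq_one hN h. by rewrite P_real // h0 qscale1.
- by rewrite P_pure ?hN ?qscale1 // (sq_mone hN h).
Qed.

Definition w1 a c := q2 c * q3 a - q3 c * q2 a.
Definition w2 a c := q3 c * q1 a - q1 c * q3 a.
Definition w3 a c := q1 c * q2 a - q2 c * q1 a.

Lemma Dform a b c x : q0 b = 0 -> q0 c = 0 ->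
  dd a (qmul (qconj x) (qmul (qmul b x) c)) =
  q1 (qmul (qmul (qconj x) b) x) * w1 a c + q2 (qmul (qmul (qconj x) b) x) * w2 a c
  + q3 (qmul (qmul (qconj x) b) x) * w3 a c.
Proof.
case: a => ????; case: b => b0 ??? /= ->; case: c => c0 ??? /= ->; case: x => ????.
by rewrite /dd /w1 /w2 /w3 /=; ring.
Qed.


Lemma w_zero a b c : q0 b = 0 -> q0 c = 0 -> N b = 1 -> q0 a = 0 -> N a = 1 ->
  (forall x, phi a (qmul (qconj x) (qmul (qmul b x) c)) = qmul (qconj x) (qmul (qmul b x) c)) ->
  [/\ w1 a c = 0, w2 a c = 0 & w3 a c = 0].
Proof.
move=> b0 c0 Nb a0 Na H.
have E : forall x, q1 (qmul (qmul (qconj x) b) x) * w1 a c + q2 (qmul (qmul (qconj x) b) x) * w2 a c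
  + q3 (qmul (qmul (qconj x) b) x) * w3 a c = 0.
  by move=> x; rewrite -Dform //; apply/(fixP _ a0 Na).
have e1 := E (Quat 1 0 0 0); have e2 := E (Quat 0 1 0 0); have e3 := E (Quat 0 0 1 0);
have e4 := E (Quat 0 0 0 1); have e5 := E (Quat 1 1 0 0); have e6 := E (Quat 1 0 1 0);
have e7 := E (Quat 1 0 0 1).
move: e1 e2 e3 e4 e5 e6 e7 Nb; rewrite /N /=.
case: b b0 {H E} => b0 b1 b2 b3 /= ->.
set W1 := w1 a c; set W2 := w2 a c; set W3 := w3 a c => e1 e2 e3 e4 e5 e6 e7 Nb.
have f1 : b1 * W1 = 0 by lra.
have f2 : b2 * W2 = 0 by lra.
have f3 : b3 * W3 = 0 by lra.
have g1 : b3 * W2 = b2 * W3 by lra.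
have g2 : b1 * W3 = b3 * W1 by lra.
have g3 : b2 * W1 = b1 * W2 by lra.
have hW1 : W1 = 0.
  have -> : W1 = W1 * (0^+2+b1^+2+b2^+2+b3^+2) by rewrite Nb mulr1.
  have -> : W1 * (0^+2+b1^+2+b2^+2+b3^+2) = b1*(b1*W1) + b1*(b2*W2) + b1*(b3*W3) + b2*(b2*W1 - b1*W2) + b3*(b3*W1 - b1*W3) by ring.
  by rewrite g3 g2 !subrr f1 f2 f3 !mulr0 !addr0.
have hW2 : W2 = 0.
  have -> : W2 = W2 * (0^+2+b1^+2+b2^+2+b3^+2) by rewrite Nb mulr1.
  have -> : W2 * (0^+2+b1^+2+b2^+2+b3^+2) = b2*(b1*W1) + b2*(b2*W2) + b2*(b3*W3) + b1*(b1*W2 - b2*W1) + b3*(b3*W2 - b2*W3) by ring.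
  by rewrite g3 g1 !subrr f1 f2 f3 !mulr0 !addr0.
have hW3 : W3 = 0.
  have -> : W3 = W3 * (0^+2+b1^+2+b2^+2+b3^+2) by rewrite Nb mulr1.
  have -> : W3 * (0^+2+b1^+2+b2^+2+b3^+2) = b3*(b1*W1) + b3*(b2*W2) + b3*(b3*W3) + b1*(b1*W3 - b3*W1) + b2*(b2*W3 - b3*W2) by ring.
  by rewrite g2 g1 !subrr f1 f2 f3 !mulr0 !addr0.
by [].

Qed.


Lemma cross0 a c : q0 a = 0 -> q0 c = 0 -> N a = 1 -> N c = 1 ->
  w1 a c = 0 -> w2 a c = 0 -> w3 a c = 0 -> c = a \/ c = qopp a.
Proof.
case: a => a0 a1 a2 a3; case: c => c0 c1 c2 c3; rewrite /N /w1 /w2 /w3 /= => -> -> Na Nc h1 h2 h3.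
set s := a1 * c1 + a2 * c2 + a3 * c3.
have k1 : c1 = s * a1.
  have -> : c1 = c1 * (0^+2+a1^+2+a2^+2+a3^+2) by rewrite Na mulr1.
  have -> : c1 * (0^+2+a1^+2+a2^+2+a3^+2) = s * a1 + a2 * (c1 * a2 - c2 * a1) - a3 * (c3 * a1 - c1 * a3) by rewrite /s; ring.
  by rewrite h3 h2 !mulr0 subr0 addr0.
have k2 : c2 = s * a2.
  have -> : c2 = c2 * (0^+2+a1^+2+a2^+2+a3^+2) by rewrite Na mulr1.
  have -> : c2 * (0^+2+a1^+2+a2^+2+a3^+2) = s * a2 - a1 * (c1 * a2 - c2 * a1) + a3 * (c2 * a3 - c3 * a2) by rewrite /s; ring.
  by rewrite h3 h1 !mulr0 subr0 addr0.
have k3 : c3 = s * a3.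
  have -> : c3 = c3 * (0^+2+a1^+2+a2^+2+a3^+2) by rewrite Na mulr1.
  have -> : c3 * (0^+2+a1^+2+a2^+2+a3^+2) = s * a3 + a1 * (c3 * a1 - c1 * a3) - a2 * (c2 * a3 - c3 * a2) by rewrite /s; ring.
  by rewrite h2 h1 !mulr0 subr0 addr0.
have hs : (s - 1) * (s + 1) = 0.
  have -> : (s - 1) * (s + 1) = s ^+ 2 * (0^+2+a1^+2+a2^+2+a3^+2) - 1 by rewrite Na; ring.
  by rewrite -Nc k1 k2 k3; ring.
move: hs => /eqP; rewrite mulf_eq0 => /orP [] /eqP hs.
- left; have e : s = 1 by lra.
  by rewrite k1 k2 k3 e !mul1r.
- right; have e : s = -1 by lra.
  by rewrite k1 k2 k3 e !mulN1r /qopp /= oppr0.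
Qed.


Lemma iii_a a b x y : q0 a = 0 -> q0 b = 0 ->
  T b a (qadd (qmul (T b a y) (qconj x)) (qmul y (phi a x))) =
  qadd (qscale (N a) (qmul (T b a y) (qconj x))) (qscale (N b) (qmul y (phi a x))).
Proof.
case: a => ????; case: b => ???? /= -> ->; case: x => ????; case: y => ????.
by apply: quatE; rewrite /N /=; ring.
Qed.
Lemma iii_ma a b x y : q0 a = 0 -> q0 b = 0 ->
  T b (qopp a) (qadd (qmul (T b (qopp a) y) (qconj x)) (qmul y (phi a x))) =
  qadd (qscale (N a) (qmul (T b (qopp a) y) (qconj x))) (qscale (N b) (qmul y (phi a x))).
Proof.
case: a => ????; case: b => ???? /= -> ->; case: x => ????; case: y => ????.
by apply: quatE; rewrite /N /=; ring.
Qed.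
Definition xb a b := qmul b (Quat 1 (- q1 a) (- q2 a) (- q3 a)).
Lemma b_p a b : q0 a = 0 ->
  dd a (qmul (qconj (xb a b)) (T b b (qconj (xb a b)))) = 2 * N b ^+ 2 * N a.
Proof.
case: a => ????; case: b => ???? /= ->.
by rewrite /dd /N /xb /=; ring.
Qed.
Lemma b_m a b : q0 a = 0 ->
  dd a (qmul (qconj (xb a b)) (T b (qopp b) (qconj (xb a b)))) = - (2 * N b ^+ 2 * N a).
Proof.
case: a => ????; case: b => ???? /= ->.
by rewrite /dd /N /xb /=; ring.
Qed.

Lemma w_pm a c : c = a \/ c = qopp a -> [/\ w1 a c = 0, w2 a c = 0 & w3 a c = 0].
Proof. by case=> ->; rewrite /w1 /w2 /w3 /=; split; ring. Qed.
End Helpers.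
Unset Implicit Arguments.

Theorem lemma12 (R : realType) (a : quat R) (psi : quat R -> quat R) :
  qnorm a = 1 ->
  linear_isometry psi ->
  let phi := fun x => T a (qconj a) (qconj x) in
  (* (1) *)
  (cond_i phi psi <-> (qmul a a = qone R \/ qmul a a = qopp (qone R))) /\
  (* (2) *)
  (qmul a a = qopp (qone R) ->
     (* (a) *)
     (forall b c : quat R, is_pure b -> is_pure c -> qnorm b = 1 -> qnorm c = 1 ->
        ((cond_ii phi (T b c) /\ cond_iii phi (T b c)) <-> (c = a \/ c = qopp a))) /\
     (* (b) *)
     (forall b : quat R, qnorm b = 1 ->
        ~ cond_ii phi (fun x => T b b (qconj x)) /\
        ~ cond_ii phi (fun x => T b (qopp b) (qconj x)))).
Proof.
move=> hna Hpsi ph.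
have eph : ph = phi a := erefl. clearbody ph. subst ph.
have Na := norm1 hna.
split.
- split.
  + move=> H; apply: (part1_fwd Na) => x; exact: H x.
  + move=> h x; exact: part1_bwd Na h x.
- move=> ha; have a0 := sq_mone Na ha.
  split.
  + move=> b c b0 c0 nb nc; have Nb := norm1 nb; have Nc := norm1 nc.
    rewrite /is_pure in b0 c0.
    split.
    * case=> Hii _.
      have [h1 h2 h3] := w_zero b0 c0 Nb a0 Na Hii.
      exact: cross0 a0 c0 Na Nc h1 h2 h3.
    * move=> hc; split.
      - move=> x; apply/(fixP _ a0 Na); rewrite /T Dform //.
        by case: (w_pm hc) => -> -> ->; rewrite !mulr0 !addr0.
      - move=> x y; case: hc => ->.
        + by rewrite iii_a // Na Nb !qscale1.
        + by rewrite iii_ma // Na Nb !qscale1.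
  + move=> b nb; have Nb := norm1 nb; split => H.
    * have := H (xb a b); move/(fixP _ a0 Na); rewrite b_p // Nb Na expr1n !mulr1.
      by move/eqP; rewrite pnatr_eq0.
    * have := H (xb a b); move/(fixP _ a0 Na); rewrite b_m // Nb Na expr1n !mulr1.
      by move/eqP; rewrite oppr_eq0 pnatr_eq0.
Qed.
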